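(* Let $L$ be a finite-dimensional Lie superalgebra over a field of characteristic different from $2,3$, let $0\to R\to F\xrightarrow{\pi} L\to 0$ be a free presentation of $L$, and let $(T,\lambda)$ be a universal element of $C(L)$. Then $T$ is isoclinic to $F/[F,R]$.
   Context: Lie superalgebras: $\mathbb{Z}_2$-graded algebras with graded skew-symmetric bracket satisfying the graded Jacobi identity; homomorphisms are even. A free presentation of $L$ is a free Lie superalgebra $F$ on a $\mathbb{Z}_2$-graded set together with a surjective homomorphism $\pi:F\to L$, with $R=\mathrm{Ker}(\pi)$. $C(L)$ is the class of pairs $(K,\lambda)$ with $\lambda:K\to L$ a surjective homomorphism and $\mathrm{Ker}(\lambda)\subseteq [K,K]\cap Z(K)$; $(T,\sigma)\in C(L)$ is universal if for every $(K,\lambda)\in C(L)$ there is a homomorphism $\tau:T\to K$ with $\lambda\circ\tau=\sigma$. Two Lie superalgebras $A,B$ are isoclinic if there are isomorphisms $\varphi:A/Z(A)\to B/Z(B)$, $\theta:A'\to B'$ ($A'=[A,A]$) with $\theta([a,b])=[c,d]$ whenever $c+Z(B)=\varphi(a+Z(A))$ and $d+Z(B)=\varphi(b+Z(A))$. *)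

(* Defs.v *)
From HB Require Import structures.
From mathcomp Require Import all_boot all_order all_algebra.
Set Implicit Arguments. Unset Strict Implicit. Unset Printing Implicit Defensive.
Import GRing.Theory.
Local Open Scope ring_scope.

(* Koszul sign (-1)^(a b) for parities a, b (false = even, true = odd). *)
Definition ksgn (K : fieldType) (a b : bool) : K := (-1) ^+ (a && b).

Record lieSuperAlg (K : fieldType) := LieSuperAlg {
  lsa_carrier :> lmodType K;
  lsa_par : bool -> lsa_carrier -> Prop;
  lsa_bracket : lsa_carrier -> lsa_carrier -> lsa_carrier;
  lsa_par0 : forall b, lsa_par b 0;
  lsa_parD : forall b x y, lsa_par b x -> lsa_par b y -> lsa_par b (x + y);
  lsa_parZ : forall b (c : K) x, lsa_par b x -> lsa_par b (c *: x);
  lsa_decomp : forall x, exists x0 x1,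
      lsa_par false x0 /\ lsa_par true x1 /\ x = x0 + x1;
  lsa_direct : forall x, lsa_par false x -> lsa_par true x -> x = 0;
  lsa_linl : forall (c : K) x y z,
      lsa_bracket (c *: x + y) z = c *: lsa_bracket x z + lsa_bracket y z;
  lsa_linr : forall (c : K) x y z,
      lsa_bracket z (c *: x + y) = c *: lsa_bracket z x + lsa_bracket z y;
  lsa_par_bracket : forall a b x y, lsa_par a x -> lsa_par b y ->
      lsa_par (addb a b) (lsa_bracket x y);
  lsa_skew : forall a b x y, lsa_par a x -> lsa_par b y ->
      lsa_bracket x y = - (ksgn K a b *: lsa_bracket y x);
  lsa_jacobi : forall a b c x y z, lsa_par a x -> lsa_par b y -> lsa_par c z ->
      ksgn K a c *: lsa_bracket x (lsa_bracket y z)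
    + ksgn K b a *: lsa_bracket y (lsa_bracket z x)
    + ksgn K c b *: lsa_bracket z (lsa_bracket x y) = 0
}.

Section Defs.
Variable K : fieldType.

Definition lsa_hom (A B : lieSuperAlg K) (f : A -> B) : Prop :=
  (forall (c : K) x y, f (c *: x + y) = c *: f x + f y) /\
  (forall x y, f (lsa_bracket x y) = lsa_bracket (f x) (f y)) /\
  (forall b x, lsa_par b x -> lsa_par b (f x)).

Definition lsa_iso (A B : lieSuperAlg K) (f : A -> B) : Prop :=
  lsa_hom f /\ bijective f.

Definition lsa_span (A : lieSuperAlg K) (S : A -> Prop) (x : A) : Prop :=
  exists n (v : 'I_n -> A) (c : 'I_n -> K),
    (forall i, S (v i)) /\ x = \sum_(i < n) c i *: v i.

Definition comm_span (A : lieSuperAlg K) (I J : A -> Prop) : A -> Prop :=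
  lsa_span (fun x => exists a b, I a /\ J b /\ x = lsa_bracket a b).

Definition derived (A : lieSuperAlg K) : A -> Prop :=
  comm_span (fun _ => True) (fun _ => True).

Definition center (A : lieSuperAlg K) (z : A) : Prop :=
  forall x, lsa_bracket z x = 0.

Definition lsa_findim (A : lieSuperAlg K) : Prop :=
  exists n (v : 'I_n -> A), forall x, lsa_span (fun y => exists i, y = v i) x.

Definition lsa_free (F : lieSuperAlg K) (X : Type) (deg : X -> bool)
    (iota : X -> F) : Prop :=
  (forall x, lsa_par (deg x) (iota x)) /\
  forall (M : lieSuperAlg K) (f : X -> M),
    (forall x, lsa_par (deg x) (f x)) ->
    exists g : F -> M, lsa_hom g /\ (forall x, g (iota x) = f x) /\
      forall h : F -> M, lsa_hom h -> (forall x, h (iota x) = f x) ->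
        forall y, h y = g y.

Definition lsa_quotient (A : lieSuperAlg K) (I : A -> Prop)
    (Q : lieSuperAlg K) (q : A -> Q) : Prop :=
  lsa_hom q /\ (forall y, exists x, q x = y) /\ (forall x, q x = 0 <-> I x).

Definition inCL (L Kt : lieSuperAlg K) (lam : Kt -> L) : Prop :=
  lsa_hom lam /\ (forall y, exists x, lam x = y) /\
  (forall x, lam x = 0 -> derived x /\ center x).

Definition universal_CL (L T : lieSuperAlg K) (sigma : T -> L) : Prop :=
  inCL sigma /\
  forall (Kt : lieSuperAlg K) (lam : Kt -> L), inCL lam ->
    exists tau : T -> Kt, lsa_hom tau /\ forall x, lam (tau x) = sigma x.

Definition derived_iso (A B : lieSuperAlg K) (theta : A -> B) : Prop :=
  (forall (c : K) x y, derived x -> derived y ->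
      theta (c *: x + y) = c *: theta x + theta y) /\
  (forall x y, derived x -> derived y ->
      theta (lsa_bracket x y) = lsa_bracket (theta x) (theta y)) /\
  (forall b x, derived x -> lsa_par b x -> lsa_par b (theta x)) /\
  (forall x, derived x -> derived (theta x)) /\
  (forall x y, derived x -> derived y -> theta x = theta y -> x = y) /\
  (forall y, derived y -> exists x, derived x /\ theta x = y).

(* isoclinism; A/Z(A), B/Z(B) are realized by quotient maps qA, qB *)
Definition isoclinic (A B : lieSuperAlg K) : Prop :=
  exists (QA : lieSuperAlg K) (qA : A -> QA) (QB : lieSuperAlg K) (qB : B -> QB)
         (phi : QA -> QB) (theta : A -> B),
    lsa_quotient (@center A) qA /\ lsa_quotient (@center B) qB /\
    lsa_iso phi /\ derived_iso theta /\
    forall a b c d, qB c = phi (qA a) -> qB d = phi (qA b) ->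
      theta (lsa_bracket a b) = lsa_bracket c d.

End Defs.

(* Main.v *)
Require Import Defs.
From HB Require Import structures.
From mathcomp Require Import all_boot all_order all_algebra.
From mathcomp Require Import boolp.
Import GRing.Theory.
Local Open Scope ring_scope.

Module Aux.
Set Implicit Arguments. Unset Strict Implicit. Unset Printing Implicit Defensive.

Lemma selfadd (V : zmodType) (x : V) : x = x + x -> x = 0.
Proof. by move=> e; apply: (addrI x); rewrite addr0 -e. Qed.

Section Gen.
Variable K : fieldType.
Variable A : lieSuperAlg K.
Local Notation br := (@lsa_bracket K A).
Local Notation par := (@lsa_par K A).

Lemma br0l (z : A) : br 0 z = 0.
Proof.
apply: selfadd; have := lsa_linl 1 (0 : A) 0 z; rewrite !scale1r addr0; exact.
Qed.

Lemma br0r (z : A) : br z 0 = 0.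
Proof.
apply: selfadd; have := lsa_linr 1 (0 : A) 0 z; rewrite !scale1r addr0; exact.
Qed.

Lemma brDl (x y z : A) : br (x + y) z = br x z + br y z.
Proof. by have := lsa_linl 1 x y z; rewrite !scale1r. Qed.
Lemma brDr (x y z : A) : br z (x + y) = br z x + br z y.
Proof. by have := lsa_linr 1 x y z; rewrite !scale1r. Qed.
Lemma brZl c (x z : A) : br (c *: x) z = c *: br x z.
Proof. by have := lsa_linl c x 0 z; rewrite !addr0 br0l addr0. Qed.
Lemma brZr c (x z : A) : br z (c *: x) = c *: br z x.
Proof. by have := lsa_linr c x 0 z; rewrite !addr0 br0r addr0. Qed.
Lemma brNl (x z : A) : br (- x) z = - br x z.
Proof. by rewrite -scaleN1r brZl scaleN1r. Qed.
Lemma brNr (x z : A) : br z (- x) = - br z x.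
Proof. by rewrite -scaleN1r brZr scaleN1r. Qed.
Lemma brBl (x y z : A) : br (x - y) z = br x z - br y z.
Proof. by rewrite brDl brNl. Qed.
Lemma brBr (x y z : A) : br z (x - y) = br z x - br z y.
Proof. by rewrite brDr brNr. Qed.

Lemma parN b (x : A) : par b x -> par b (- x).
Proof. by move=> h; rewrite -scaleN1r; apply: lsa_parZ. Qed.
Lemma parB b (x y : A) : par b x -> par b y -> par b (x - y).
Proof. by move=> h1 h2; apply: lsa_parD => //; apply: parN. Qed.

Lemma par_both b (x : A) : par b x -> par (~~ b) x -> x = 0.
Proof. by case: b => /= h1 h2; apply: lsa_direct. Qed.

Lemma par_sum0 b (u w : A) : par b u -> par (~~ b) w -> u + w = 0 -> u = 0 /\ w = 0.
Proof.
move=> hu hw e.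
have ew : w = - u by apply/eqP; rewrite -addr_eq0 addrC e.
have u0 : u = 0.
  apply: (par_both hu); rewrite -[u]opprK -ew; exact: parN.
by split => //; rewrite ew u0 oppr0.
Qed.

Lemma par_uniq (a0 a1 b0 b1 : A) : par false a0 -> par true a1 ->
  par false b0 -> par true b1 -> a0 + a1 = b0 + b1 -> a0 = b0 /\ a1 = b1.
Proof.
move=> h0 h1 g0 g1 e.
have : (a0 - b0) + (a1 - b1) = 0.
  by rewrite addrACA e -opprD subrr.
case/(par_sum0 (parB h0 g0) (parB h1 g1)) => /eqP; rewrite subr_eq0 => /eqP ->.
by move/eqP; rewrite subr_eq0 => /eqP ->.
Qed.

Lemma Lhom (z : A) : (forall p x, par p x -> br z x = 0) -> forall x, br z x = 0.
Proof.
move=> h x; have [x0 [x1 [h0 [h1 ->]]]] := lsa_decomp x.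
by rewrite brDr (h _ _ h0) (h _ _ h1) addr0.
Qed.
Lemma Rhom (z : A) : (forall p x, par p x -> br x z = 0) -> forall x, br x z = 0.
Proof.
move=> h x; have [x0 [x1 [h0 [h1 ->]]]] := lsa_decomp x.
by rewrite brDl (h _ _ h0) (h _ _ h1) addr0.
Qed.

Lemma LR (z : A) : (forall x, br z x = 0) -> forall x, br x z = 0.
Proof.
move=> h; have [z0 [z1 [h0 [h1 ez]]]] := lsa_decomp z.
apply: Rhom => p x hx.
have e : br z0 x + br z1 x = 0 by rewrite -brDl -ez h.
have hp0 := lsa_par_bracket h0 hx; have hp1 := lsa_par_bracket h1 hx.
have [e0 e1] : br z0 x = 0 /\ br z1 x = 0.
  by move: hp0 hp1; rewrite /= ?addbF ?addbT ?addTb => hp0 hp1; apply: (par_sum0 hp0).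
by rewrite ez brDr (lsa_skew hx h0) (lsa_skew hx h1) e0 e1 !scaler0 oppr0 addr0.
Qed.

Lemma RL (z : A) : (forall x, br x z = 0) -> forall x, br z x = 0.
Proof.
move=> h; have [z0 [z1 [h0 [h1 ez]]]] := lsa_decomp z.
apply: Lhom => p x hx.
have e : br x z0 + br x z1 = 0 by rewrite -brDr -ez h.
have hp0 := lsa_par_bracket hx h0; have hp1 := lsa_par_bracket hx h1.
have [e0 e1] : br x z0 = 0 /\ br x z1 = 0.
  by move: hp0 hp1; rewrite /= ?addbF ?addbT ?addTb => hp0 hp1; apply: (par_sum0 hp0).
by rewrite ez brDl (lsa_skew h0 hx) (lsa_skew h1 hx) e0 e1 !scaler0 oppr0 addr0.
Qed.

Lemma centerR (z : A) : center z -> forall x, br x z = 0.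
Proof. exact: LR. Qed.

Lemma span_ind (S Pr : A -> Prop) : Pr 0 -> (forall x, S x -> Pr x) ->
  (forall c x y, Pr x -> Pr y -> Pr (c *: x + y)) -> forall x, lsa_span S x -> Pr x.
Proof.
move=> P0 PS PL x [n [v [c [hv ->]]]].
elim: n v c hv => [|n IH] v c hv; first by rewrite big_ord0.
rewrite big_ord_recr /= addrC; apply: PL; first exact: PS.
exact: IH (fun i => v (widen_ord (leqnSn n) i)) _ (fun i => hv _).
Qed.

Lemma span_in (S : A -> Prop) x : S x -> lsa_span S x.
Proof.
by move=> h; exists 1%N, (fun _ => x), (fun _ => 1); split => //; rewrite big_ord1 scale1r.
Qed.

Lemma span0 (S : A -> Prop) : lsa_span S 0.
Proof. by exists 0%N, (fun _ => 0), (fun _ => 0); split; [case | rewrite big_ord0]. Qed.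

Lemma span_lin (S : A -> Prop) c x y : lsa_span S x -> lsa_span S y -> lsa_span S (c *: x + y).
Proof.
move=> [n [v [a [hv ->]]]] [m [w [b [hw ->]]]].
exists (n + m)%N.
exists (fun k => match split k with inl i => v i | inr j => w j end).
exists (fun k => match split k with inl i => c * a i | inr j => b j end).
split; first by move=> k; case: (split k).
rewrite big_split_ord /=.
have E1 i : split (lshift m i) = inl i := unsplitK (inl i).
have E2 i : split (rshift n i) = inr i := unsplitK (inr i).
congr (_ + _).
  rewrite scaler_sumr; apply: eq_bigr => i _; by rewrite E1 scalerA.
by apply: eq_bigr => i _; rewrite E2.
Qed.

Lemma span_add (S : A -> Prop) x y : lsa_span S x -> lsa_span S y -> lsa_span S (x + y).
Proof. by move=> h1 h2; have := span_lin 1 h1 h2; rewrite scale1r. Qed.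
Lemma span_scale (S : A -> Prop) c x : lsa_span S x -> lsa_span S (c *: x).
Proof. by move=> h1; have := span_lin c h1 (span0 S); rewrite addr0. Qed.
Lemma span_opp (S : A -> Prop) x : lsa_span S x -> lsa_span S (- x).
Proof. by move=> h; rewrite -scaleN1r; apply: span_scale. Qed.
Lemma span_sub (S : A -> Prop) x y : lsa_span S x -> lsa_span S y -> lsa_span S (x - y).
Proof. by move=> h1 h2; apply: span_add => //; apply: span_opp. Qed.

Lemma derived_br (a b : A) : derived (br a b).
Proof. by apply: span_in; exists a, b. Qed.

Lemma derived_ind (Pr : A -> Prop) : Pr 0 -> (forall a b, Pr (br a b)) ->
  (forall c x y, Pr x -> Pr y -> Pr (c *: x + y)) -> forall x, derived x -> Pr x.
Proof.
move=> P0 Pb PL; apply: span_ind => // x [a [b [_ [_ ->]]]]; exact: Pb.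
Qed.

Lemma derived_graded (x : A) : derived x -> exists x0 x1,
  derived x0 /\ derived x1 /\ par false x0 /\ par true x1 /\ x = x0 + x1.
Proof.
move: x; apply: derived_ind.
- by exists 0, 0; do !split; try apply: span0; try apply: lsa_par0; rewrite addr0.
- move=> a b.
  have [a0 [a1 [ha0 [ha1 ->]]]] := lsa_decomp a.
  have [b0 [b1 [hb0 [hb1 ->]]]] := lsa_decomp b.
  exists (br a0 b0 + br a1 b1), (br a0 b1 + br a1 b0).
  do !split; try (apply: span_add; apply: derived_br).
  + by apply: lsa_parD; [exact: (lsa_par_bracket ha0 hb0)|exact: (lsa_par_bracket ha1 hb1)].
  + by apply: lsa_parD; [exact: (lsa_par_bracket ha0 hb1)|exact: (lsa_par_bracket ha1 hb0)].
  + rewrite !brDl !brDr -!addrA; congr (_ + _).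
    by rewrite (addrC (br a1 b1)) addrA.
- move=> c x y [x0 [x1 [d0 [d1 [p0 [p1 ->]]]]]] [y0 [y1 [e0 [e1 [q0 [q1 ->]]]]]].
  exists (c *: x0 + y0), (c *: x1 + y1).
  do !split; try (apply: span_lin => //).
  + by apply: lsa_parD => //; apply: lsa_parZ.
  + by apply: lsa_parD => //; apply: lsa_parZ.
  + by rewrite scalerDr addrACA.
Qed.

End Gen.

Section Homs.
Variable K : fieldType.
Variables A B : lieSuperAlg K.
Variable g : A -> B.
Hypothesis hg : lsa_hom g.

Lemma hom0 : g 0 = 0.
Proof.
apply: selfadd; have := hg.1 1 0 0; rewrite !scale1r addr0; exact.
Qed.
Lemma homD x y : g (x + y) = g x + g y.
Proof. by have := hg.1 1 x y; rewrite !scale1r. Qed.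
Lemma homZ c x : g (c *: x) = c *: g x.
Proof. by have := hg.1 c x 0; rewrite !addr0 hom0 addr0. Qed.
Lemma homN x : g (- x) = - g x.
Proof. by rewrite -scaleN1r homZ scaleN1r. Qed.
Lemma homB x y : g (x - y) = g x - g y.
Proof. by rewrite homD homN. Qed.
Lemma homL c x y : g (c *: x + y) = c *: g x + g y.
Proof. exact: hg.1. Qed.
Lemma homBr x y : g (lsa_bracket x y) = lsa_bracket (g x) (g y).
Proof. exact: hg.2.1. Qed.
Lemma homP b x : lsa_par b x -> lsa_par b (g x).
Proof. exact: hg.2.2. Qed.

Lemma hom_derived x : derived x -> derived (g x).
Proof.
move: x; apply: derived_ind; first by rewrite hom0; apply: span0.
  by move=> a b; rewrite homBr; apply: derived_br.
by move=> c x1 y1 h1 h2; rewrite homL; apply: span_lin.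
Qed.

Lemma hom_par_lift : (forall y, exists x, g x = y) ->
  forall b y, lsa_par b y -> exists x, lsa_par b x /\ g x = y.
Proof.
move=> sg b y hy; have [x ex0] := sg y; subst y.
have [x0 [x1 [h0 [h1 ex]]]] := lsa_decomp x.
have hx: g x0 + g x1 = g x + 0 by rewrite addr0 ex homD.
case: b hy => hy.
- have [_ e] := par_uniq (homP h0) (homP h1) (lsa_par0 _ _) hy (etrans hx (addrC _ _)).
  by exists x1; split => //; rewrite ex homD -e add0r.
- have [e _] := par_uniq (homP h0) (homP h1) hy (lsa_par0 _ _) hx.
  by exists x0; split => //; rewrite ex homD e.
Qed.

End Homs.

Lemma hom_comp (K : fieldType) (A B C : lieSuperAlg K) (g : A -> B) (h : B -> C) :
  lsa_hom g -> lsa_hom h -> lsa_hom (fun x => h (g x)).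
Proof.
move=> hg hh; split; first by move=> c x y; rewrite (homL hg) (homL hh).
split; first by move=> x y; rewrite (homBr hg) (homBr hh).
by move=> b x hx; apply: (homP hh); apply: (homP hg).
Qed.


Section SubQuo.
Variables (K : fieldType) (A : lieSuperAlg K) (V : Type) (f : A -> V) (P : A -> Prop).
Local Notation br := (@lsa_bracket K A).
Local Notation par := (@lsa_par K A).
Hypothesis P0 : P 0.
Hypothesis PL : forall c x y, P x -> P y -> P (c *: x + y).
Hypothesis Pbr : forall x y, P x -> P y -> P (br x y).
Hypothesis Pdec : forall x, P x -> exists x0 x1,
  P x0 /\ P x1 /\ par false x0 /\ par true x1 /\ x = x0 + x1.
Hypothesis fL : forall c a b a' b', P a -> P b -> P a' -> P b' ->
  f a = f a' -> f b = f b' -> f (c *: a + b) = f (c *: a' + b').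
Hypothesis fbr : forall a b a' b', P a -> P b -> P a' -> P b' ->
  f a = f a' -> f b = f b' -> f (br a b) = f (br a' b').
Hypothesis fpar : forall a0 a1, P a0 -> P a1 -> par false a0 -> par true a1 ->
  f a0 = f a1 -> f a0 = f 0.

Definition SQ := {v : V | exists a, P a /\ v = f a}.
HB.instance Definition _ := gen_eqMixin SQ.
HB.instance Definition _ := gen_choiceMixin SQ.

Definition inSQ (a : A) (Ha : P a) : SQ := exist _ (f a) (ex_intro _ a (conj Ha erefl)).
Definition rep (v : SQ) : A := proj1_sig (cid (proj2_sig v)).
Lemma repP v : P (rep v) /\ proj1_sig v = f (rep v).
Proof. exact: (proj2_sig (cid (proj2_sig v))). Qed.

Lemma SQ_eq (u v : SQ) : proj1_sig u = proj1_sig v -> u = v.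
Proof.
case: u => u hu; case: v => v hv /= e; subst v.
by rewrite (Prop_irrelevance hu hv).
Qed.

Lemma inSQ_eq (a b : A) (Ha : P a) (Hb : P b) : f a = f b -> inSQ Ha = inSQ Hb.
Proof. by move=> e; apply: SQ_eq. Qed.
Lemma inSQ_irr (a b : A) (Ha : P a) (Hb : P b) : a = b -> inSQ Ha = inSQ Hb.
Proof. by move=> e; apply: inSQ_eq; rewrite e. Qed.
Lemma inSQ_inj (a b : A) (Ha : P a) (Hb : P b) : inSQ Ha = inSQ Hb -> f a = f b.
Proof. by move=> e; have := congr1 (@proj1_sig _ _) e. Qed.
Lemma rep_inSQ (a : A) (Ha : P a) : f (rep (inSQ Ha)) = f a.
Proof. by rewrite -(repP _).2. Qed.
Lemma SQ_ex (v : SQ) : exists (a : A) (Ha : P a), v = inSQ Ha.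
Proof. exists (rep v), (repP v).1; apply: SQ_eq => /=; exact: (repP v).2. Qed.

Lemma P_add x y : P x -> P y -> P (x + y).
Proof. by move=> h1 h2; have := PL 1 h1 h2; rewrite scale1r. Qed.
Lemma P_scale c x : P x -> P (c *: x).
Proof. by move=> h1; have := PL c h1 P0; rewrite addr0. Qed.
Lemma P_opp x : P x -> P (- x).
Proof. by move=> h; rewrite -scaleN1r; apply: P_scale. Qed.

Lemma f_add a b a' b' : P a -> P b -> P a' -> P b' ->
  f a = f a' -> f b = f b' -> f (a + b) = f (a' + b').
Proof. by move=> *; have := @fL 1 a b a' b'; rewrite !scale1r; apply. Qed.
Lemma f_scale c a a' : P a -> P a' -> f a = f a' -> f (c *: a) = f (c *: a').
Proof. by move=> *; have := @fL c a 0 a' 0; rewrite !addr0; apply. Qed.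

Definition zeroS : SQ := inSQ P0.
Definition addS (u v : SQ) : SQ := inSQ (P_add (repP u).1 (repP v).1).
Definition scaleS (c : K) (u : SQ) : SQ := inSQ (P_scale c (repP u).1).
Definition oppS (u : SQ) : SQ := inSQ (P_opp (repP u).1).
Definition brS (u v : SQ) : SQ := inSQ (Pbr (repP u).1 (repP v).1).

Lemma add_in (a b : A) (Ha : P a) (Hb : P b) : addS (inSQ Ha) (inSQ Hb) = inSQ (P_add Ha Hb).
Proof.
apply: inSQ_eq; apply: f_add => //; try exact: (repP _).1; exact: rep_inSQ.
Qed.
Lemma scale_in c (a : A) (Ha : P a) : scaleS c (inSQ Ha) = inSQ (P_scale c Ha).
Proof. apply: inSQ_eq; apply: f_scale => //; try exact: (repP _).1; exact: rep_inSQ. Qed.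
Lemma opp_in (a : A) (Ha : P a) : oppS (inSQ Ha) = inSQ (P_opp Ha).
Proof.
apply: inSQ_eq; rewrite -!scaleN1r; apply: f_scale => //; try exact: (repP _).1; exact: rep_inSQ.
Qed.
Lemma br_in (a b : A) (Ha : P a) (Hb : P b) : brS (inSQ Ha) (inSQ Hb) = inSQ (Pbr Ha Hb).
Proof. apply: inSQ_eq; apply: fbr => //; try exact: (repP _).1; exact: rep_inSQ. Qed.

Lemma addSA : associative addS.
Proof.
move=> u v w; have [a [Ha ->]] := SQ_ex u; have [b [Hb ->]] := SQ_ex v.
have [c [Hc ->]] := SQ_ex w; rewrite !add_in; apply: inSQ_irr; exact: addrA.
Qed.
Lemma addSC : commutative addS.
Proof.
move=> u v; have [a [Ha ->]] := SQ_ex u; have [b [Hb ->]] := SQ_ex v.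
rewrite !add_in; apply: inSQ_irr; exact: addrC.
Qed.
Lemma add0S : left_id zeroS addS.
Proof.
move=> u; have [a [Ha ->]] := SQ_ex u; rewrite /zeroS add_in; apply: inSQ_irr; exact: add0r.
Qed.
Lemma addNS : left_inverse zeroS oppS addS.
Proof.
move=> u; have [a [Ha ->]] := SQ_ex u; rewrite opp_in add_in; apply: inSQ_irr; exact: addNr.
Qed.

HB.instance Definition _ := GRing.isZmodule.Build SQ addSA addSC add0S addNS.
Lemma SQ_addE (u v : SQ) : u + v = addS u v. Proof. by []. Qed.

Lemma scaleSA a b v : scaleS a (scaleS b v) = scaleS (a * b) v.
Proof. have [x [Hx ->]] := SQ_ex v; rewrite !scale_in; apply: inSQ_irr; exact: scalerA. Qed.
Lemma scale1S : left_id 1 scaleS.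
Proof. move=> v; have [x [Hx ->]] := SQ_ex v; rewrite !scale_in; apply: inSQ_irr; exact: scale1r. Qed.
Lemma scaleSDr : right_distributive scaleS +%R.
Proof.
move=> c u v; have [a [Ha ->]] := SQ_ex u; have [b [Hb ->]] := SQ_ex v.
rewrite !SQ_addE (add_in Ha Hb) !scale_in add_in; apply: inSQ_irr; exact: scalerDr.
Qed.
Lemma scaleSDl v : {morph scaleS^~ v: a b / a + b}.
Proof.
move=> a b; have [x [Hx ->]] := SQ_ex v.
rewrite !SQ_addE !scale_in add_in; apply: inSQ_irr; exact: scalerDl.
Qed.

HB.instance Definition _ := GRing.Zmodule_isLmodule.Build K SQ scaleSA scale1S scaleSDr scaleSDl.

Lemma SQ_scaleE c (u : SQ) : c *: u = scaleS c u. Proof. by []. Qed.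
Lemma SQ_oppE (u : SQ) : - u = oppS u. Proof. by []. Qed.
Lemma SQ_zeroE : (0 : SQ) = zeroS. Proof. by []. Qed.

Definition parS (b : bool) (v : SQ) : Prop := exists a (Ha : P a), par b a /\ v = inSQ Ha.

Lemma lin_in c (a b : A) (Ha : P a) (Hb : P b) : c *: inSQ Ha + inSQ Hb = inSQ (PL c Ha Hb).
Proof. by rewrite SQ_scaleE SQ_addE scale_in add_in; apply: inSQ_irr. Qed.

Lemma parS0 b : parS b 0.
Proof. by exists 0, P0; split => //; apply: lsa_par0. Qed.
Lemma parSD b x y : parS b x -> parS b y -> parS b (x + y).
Proof.
move=> [a [Ha [pa ->]]] [a' [Ha' [pa' ->]]].
exists (a + a'), (P_add Ha Ha'); split; first exact: lsa_parD.
by rewrite SQ_addE add_in.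
Qed.
Lemma parSZ b c x : parS b x -> parS b (c *: x).
Proof.
move=> [a [Ha [pa ->]]]; exists (c *: a), (P_scale c Ha); split; first exact: lsa_parZ.
by rewrite SQ_scaleE scale_in.
Qed.
Lemma parSdec (x : SQ) : exists x0 x1, parS false x0 /\ parS true x1 /\ x = x0 + x1.
Proof.
have [a [Ha ->]] := SQ_ex x.
have [a0 [a1 [H0 [H1 [p0 [p1 e]]]]]] := Pdec Ha.
exists (inSQ H0), (inSQ H1); split; first by exists a0, H0.
split; first by exists a1, H1.
by rewrite SQ_addE add_in; apply: inSQ_irr.
Qed.
Lemma parSdirect (x : SQ) : parS false x -> parS true x -> x = 0.
Proof.
move=> [a [Ha [pa ->]]] [a' [Ha' [pa' e]]].
rewrite SQ_zeroE; apply: inSQ_eq; apply: (fpar Ha Ha' pa pa'); exact: inSQ_inj e.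
Qed.
Lemma brS_linl c x y z : brS (c *: x + y) z = c *: brS x z + brS y z.
Proof.
have [a [Ha ->]] := SQ_ex x; have [b [Hb ->]] := SQ_ex y; have [d [Hd ->]] := SQ_ex z.
by rewrite lin_in !br_in lin_in; apply: inSQ_irr; apply: lsa_linl.
Qed.
Lemma brS_linr c x y z : brS z (c *: x + y) = c *: brS z x + brS z y.
Proof.
have [a [Ha ->]] := SQ_ex x; have [b [Hb ->]] := SQ_ex y; have [d [Hd ->]] := SQ_ex z.
by rewrite lin_in !br_in lin_in; apply: inSQ_irr; apply: lsa_linr.
Qed.
Lemma brS_par a b x y : parS a x -> parS b y -> parS (addb a b) (brS x y).
Proof.
move=> [u [Hu [pu ->]]] [v [Hv [pv ->]]].
exists (br u v), (Pbr Hu Hv); split; first exact: lsa_par_bracket.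
by rewrite br_in.
Qed.
Lemma brS_skew a b x y : parS a x -> parS b y -> brS x y = - (ksgn K a b *: brS y x).
Proof.
move=> [u [Hu [pu ->]]] [v [Hv [pv ->]]].
rewrite !br_in SQ_scaleE scale_in SQ_oppE opp_in; apply: inSQ_irr; exact: lsa_skew.
Qed.
Lemma brS_jacobi a b c x y z : parS a x -> parS b y -> parS c z ->
  ksgn K a c *: brS x (brS y z) + ksgn K b a *: brS y (brS z x)
  + ksgn K c b *: brS z (brS x y) = 0.
Proof.
move=> [u [Hu [pu ->]]] [v [Hv [pv ->]]] [w [Hw [pw ->]]].
rewrite !br_in !SQ_scaleE !scale_in !SQ_addE !add_in SQ_zeroE.
by apply: inSQ_irr; apply: lsa_jacobi.
Qed.

Definition SQalg : lieSuperAlg K :=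
  @LieSuperAlg K SQ parS brS parS0 parSD parSZ parSdec parSdirect brS_linl brS_linr
    brS_par brS_skew brS_jacobi.

Lemma SQ_lin c (a b : A) (Ha : P a) (Hb : P b) (H : P (c *: a + b)) :
  inSQ H = c *: (inSQ Ha : SQalg) + inSQ Hb.
Proof. by rewrite lin_in; apply: inSQ_irr. Qed.
Lemma SQ_br (a b : A) (Ha : P a) (Hb : P b) (H : P (br a b)) :
  inSQ H = lsa_bracket (l := SQalg) (inSQ Ha) (inSQ Hb).
Proof. by rewrite /= br_in; apply: inSQ_irr. Qed.
Lemma SQ_par b (a : A) (Ha : P a) : par b a -> lsa_par (l := SQalg) b (inSQ Ha).
Proof. by move=> h; exists a, Ha. Qed.
Lemma SQ_parinv b (v : SQalg) : lsa_par b v -> exists (a : A) (Ha : P a), par b a /\ v = inSQ Ha.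
Proof. by []. Qed.
Lemma SQ_exists (v : SQalg) : exists (a : A) (Ha : P a), v = inSQ Ha.
Proof. exact: SQ_ex. Qed.
Lemma SQ_0 : (0 : SQalg) = inSQ P0.
Proof. by []. Qed.

End SubQuo.


Section Generic.
Variable K : fieldType.

Lemma free_unique (F : lieSuperAlg K) (X : Type) (deg : X -> bool) (iota : X -> F)
  (hF : lsa_free deg iota) (M : lieSuperAlg K) (h1 h2 : F -> M) :
  lsa_hom h1 -> lsa_hom h2 -> (forall x, h1 (iota x) = h2 (iota x)) -> forall y, h1 y = h2 y.
Proof.
move=> hh1 hh2 e y.
have [g [hg [gi gu]]] := hF.2 M (fun x => h1 (iota x)) (fun x => homP hh1 (hF.1 x)).
by rewrite (gu h1 hh1 (fun x => erefl)) (gu h2 hh2 (fun x => esym (e x))).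
Qed.

Lemma free_lift (F : lieSuperAlg K) (X : Type) (deg : X -> bool) (iota : X -> F)
  (hF : lsa_free deg iota) (L T : lieSuperAlg K) (pi : F -> L) (lam : T -> L) :
  lsa_hom pi -> lsa_hom lam -> (forall y, exists x, lam x = y) ->
  exists b : F -> T, lsa_hom b /\ forall a, lam (b a) = pi a.
Proof.
move=> hpi hlam slam.
have lift x : exists t, lsa_par (deg x) t /\ lam t = pi (iota x).
  exact: (hom_par_lift hlam slam (homP hpi (hF.1 x))).
pose f0 x := proj1_sig (cid (lift x)).
have f0P x : lsa_par (deg x) (f0 x) /\ lam (f0 x) = pi (iota x) := proj2_sig (cid (lift x)).
have [g [hg [gi _]]] := hF.2 T f0 (fun x => (f0P x).1).
exists g; split => //.
apply: (free_unique hF (hom_comp hg hlam) hpi) => x /=.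
by rewrite gi (f0P x).2.
Qed.

Lemma agree_derived (A B M : lieSuperAlg K) (h1 h2 : A -> B) (mu : B -> M) :
  lsa_hom h1 -> lsa_hom h2 -> lsa_hom mu -> (forall a, mu (h1 a) = mu (h2 a)) ->
  (forall z, mu z = 0 -> center z) -> forall x, derived x -> h1 x = h2 x.
Proof.
move=> hh1 hh2 hmu e cz; apply: derived_ind.
- by rewrite (hom0 hh1) (hom0 hh2).
- move=> a b.
  have za : center (h1 a - h2 a) by apply: cz; rewrite (homB hmu) e subrr.
  have zb : center (h1 b - h2 b) by apply: cz; rewrite (homB hmu) e subrr.
  rewrite (homBr hh1) (homBr hh2).
  move: (h1 a - h2 a) (h1 b - h2 b) za zb (subrK (h2 a) (h1 a)) (subrK (h2 b) (h1 b)).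
  move=> u v zu zv <- <-.
  by rewrite brDl !brDr !zu !(centerR zv) ?add0r ?addr0.
- by move=> c x y e1 e2; rewrite (homL hh1) (homL hh2) e1 e2.
Qed.

Lemma derived_lift (A B : lieSuperAlg K) (g : A -> B) : lsa_hom g ->
  (forall y, exists x, g x = y) -> forall y, derived y -> exists x, derived x /\ g x = y.
Proof.
move=> hg sg; apply: derived_ind.
- by exists 0; split; [apply: span0 | apply: hom0].
- move=> a b; have [x1 <-] := sg a; have [x2 <-] := sg b.
  by exists (lsa_bracket x1 x2); split; [apply: derived_br | apply: homBr].
- move=> c x y [x1 [d1 <-]] [x2 [d2 <-]].
  by exists (c *: x1 + x2); split; [apply: span_lin | apply: homL].
Qed.

Lemma center0 (A : lieSuperAlg K) : center (0 : A).
Proof. by move=> x; apply: br0l. Qed.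

Lemma centerB (A : lieSuperAlg K) (x y : A) : center x -> center y -> center (x - y).
Proof. by move=> h1 h2 z; rewrite brBl h1 h2 subrr. Qed.

End Generic.


Lemma hom_sumZ (K : fieldType) (A B : lieSuperAlg K) (g : A -> B) (hg : lsa_hom g)
  n (c : 'I_n -> K) (v : 'I_n -> A) :
  g (\sum_(j < n) c j *: v j) = \sum_(j < n) c j *: g (v j).
Proof.
elim: n c v => [|n IH] c v; first by rewrite !big_ord0 (hom0 hg).
by rewrite !big_ord_recr /= (homD hg) (homZ hg) IH.
Qed.

Lemma par_sum (K : fieldType) (A : lieSuperAlg K) b n (F : 'I_n -> A) :
  (forall j, lsa_par b (F j)) -> lsa_par b (\sum_(j < n) F j).
Proof.
move=> h; elim: n F h => [|n IH] F h; first by rewrite big_ord0; apply: lsa_par0.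
by rewrite big_ord_recr /=; apply: lsa_parD => //; apply: IH.
Qed.

Lemma br_center_eq (K : fieldType) (A : lieSuperAlg K) (a a' b b' : A) :
  center (a - a') -> center (b - b') -> lsa_bracket a b = lsa_bracket a' b'.
Proof.
move=> za zb.
move: (a - a') (b - b') za zb (subrK a' a) (subrK b' b) => u v zu zv <- <-.
by rewrite brDl !brDr !zu !(centerR zv) ?add0r ?addr0.
Qed.

Lemma rearr (V : zmodType) (l a S1 T2 : V) : l - (S1 - T2) = l - (a + S1) + (a + T2).
Proof. by rewrite [a + S1]addrC opprD addrA addrA opprK opprD addrA subrK. Qed.

Lemma min_ex (S : nat -> Prop) : (exists n, S n) -> exists m, S m /\ forall k, S k -> (m <= k)%N.
Proof.
move=> [n Sn]; apply: contrapT => H.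
suff: forall n k, (k <= n)%N -> ~ S k by move/(_ n n (leqnn n)).
elim=> [|n' IH] k hk Sk.
  apply: H; exists k; split => // k' _; move: hk; rewrite leqn0 => /eqP ->; by [].
case: (leqP k n') => [hkn|hnk]; first exact: IH hkn Sk.
apply: H; exists k; split => // k' Sk'; rewrite leqNgt; apply/negP => hk'.
by apply: (IH k') Sk'; rewrite -ltnS (leq_trans hk' hk).
Qed.

Lemma delta_sum (K : fieldType) (V : lmodType K) n (w : 'I_n -> V) i :
  \sum_(i' < n) (i' == i)%:R *: w i' = w i.
Proof.
rewrite (bigD1 i) //= eqxx scale1r big1 ?addr0 // => j /negPf ->.
by rewrite scale0r.
Qed.

Section ADsec.
Variables (K : fieldType) (T : lieSuperAlg K).

Definition ad (t : T) : T -> T := fun x => lsa_bracket t x.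

Lemma ad_center (a a' : T) : ad a = ad a' -> center (a - a').
Proof. by move=> e x; rewrite brBl -/(ad a x) e subrr. Qed.

Lemma PTL (c : K) (x y : T) : True -> True -> True. Proof. by []. Qed.
Lemma PTbr (x y : T) : True -> True -> True. Proof. by []. Qed.
Lemma PTdec (x : T) : True -> exists x0 x1 : T,
  True /\ True /\ lsa_par false x0 /\ lsa_par true x1 /\ x = x0 + x1.
Proof. by move=> _; have [x0 [x1 [h0 [h1 e]]]] := lsa_decomp x; exists x0, x1. Qed.
Lemma adL (c : K) (a b a' b' : T) : True -> True -> True -> True ->
  ad a = ad a' -> ad b = ad b' -> ad (c *: a + b) = ad (c *: a' + b').
Proof.
move=> _ _ _ _ e1 e2; apply: funext => x; rewrite /ad !lsa_linl.
by rewrite -/(ad a x) -/(ad b x) e1 e2.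
Qed.
Lemma adbr (a b a' b' : T) : True -> True -> True -> True ->
  ad a = ad a' -> ad b = ad b' -> ad (lsa_bracket a b) = ad (lsa_bracket a' b').
Proof.
move=> _ _ _ _ e1 e2.
by rewrite (br_center_eq (ad_center e1) (ad_center e2)).
Qed.
Lemma adpar (a0 a1 : T) : True -> True -> lsa_par false a0 -> lsa_par true a1 ->
  ad a0 = ad a1 -> ad a0 = ad 0.
Proof.
move=> _ _ p0 p1 e; apply: funext => x; rewrite /ad br0l.
move: x; apply: Lhom => p x hx.
have h0 := lsa_par_bracket p0 hx; have h1 := lsa_par_bracket p1 hx.
apply: (par_both h0); rewrite -/(ad a0 x) e; exact: h1.
Qed.

Definition PT : lieSuperAlg K :=
  @SQalg K T (T -> T) ad (fun _ => True) I PTL PTbr PTdec adL adbr adpar.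
Definition qA (t : T) : PT := @inSQ K T (T -> T) ad (fun _ => True) t I.

Lemma qA_eq (a b : T) : qA a = qA b <-> ad a = ad b.
Proof.
split; first by move=> e; have := congr1 (@proj1_sig _ _) e.
by move=> e; apply: SQ_eq.
Qed.

Lemma hqA : lsa_hom qA.
Proof.
split; first by move=> c x y; exact: (@SQ_lin _ _ _ _ _ I PTL PTbr PTdec adL adbr adpar c x y I I I).
split; first by move=> x y; exact: (@SQ_br _ _ _ _ _ I PTL PTbr PTdec adL adbr adpar x y I I I).
by move=> b x hx; exact: (@SQ_par _ _ _ _ _ I PTL PTbr PTdec adL adbr adpar b x I hx).
Qed.

Lemma sqA (v : PT) : exists t, qA t = v.
Proof.
have [a [Ha ->]] := @SQ_exists _ _ _ _ _ I PTL PTbr PTdec adL adbr adpar v.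
by exists a; case: Ha.
Qed.

Lemma qA_ker (a : T) : qA a = 0 <-> center a.
Proof.
have -> : (0 : PT) = qA 0 by exact: (@SQ_0 _ _ _ _ _ I PTL PTbr PTdec adL adbr adpar).
rewrite qA_eq; split.
  by move=> e x; rewrite -/(ad a x) e /ad br0l.
by move=> h; apply: funext => x; rewrite /ad h br0l.
Qed.

Lemma qA_quot : lsa_quotient (@center K T) qA.
Proof. by split; [exact: hqA | split; [exact: sqA | exact: qA_ker]]. Qed.

End ADsec.

Section Main.
Variables (K : fieldType) (L : lieSuperAlg K) (X : Type) (deg : X -> bool)
  (F : lieSuperAlg K) (iota : X -> F).
Hypothesis hF : lsa_free deg iota.
Variables (pi : F -> L) (T : lieSuperAlg K) (lam : T -> L) (Q : lieSuperAlg K) (q : F -> Q).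
Hypotheses (hpi : lsa_hom pi) (hpis : forall y, exists x, pi x = y) (hT : universal_CL lam)
  (hq : lsa_quotient (comm_span (fun _ : F => True) (fun r => pi r = 0)) q).

Lemma hlam : lsa_hom lam. Proof. exact: hT.1.1. Qed.
Lemma slam : forall y, exists x, lam x = y. Proof. exact: hT.1.2.1. Qed.
Lemma klam : forall x, lam x = 0 -> derived x /\ center x. Proof. exact: hT.1.2.2. Qed.
Lemma hqh : lsa_hom q. Proof. exact: hq.1. Qed.
Lemma sq : forall y, exists x, q x = y. Proof. exact: hq.2.1. Qed.

Variable bp : F -> T.
Hypotheses (hbp : lsa_hom bp) (bpl : forall a, lam (bp a) = pi a).

Lemma bp_kerq x : q x = 0 -> bp x = 0.
Proof.
move/(hq.2.2 x).1; move: x; apply: span_ind.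
- exact: hom0.
- move=> y [a [b [_ [pb ->]]]]; rewrite (homBr hbp).
  have zb : center (bp b) by apply: (klam _).2; rewrite bpl.
  exact: centerR.
- by move=> c x1 y1 e1 e2; rewrite (homL hbp) e1 e2 scaler0 addr0.
Qed.

Lemma bp_q x x' : q x = q x' -> bp x = bp x'.
Proof.
move=> e; apply/eqP; rewrite -subr_eq0 -(homB hbp); apply/eqP; apply: bp_kerq.
by rewrite (homB hqh) e subrr.
Qed.

Lemma exists_beta : exists beta : Q -> T, lsa_hom beta /\ forall x, beta (q x) = bp x.
Proof.
pose rq y := proj1_sig (cid (sq y)).
have rqP y : q (rq y) = y := proj2_sig (cid (sq y)).
exists (fun y => bp (rq y)).
have bq x : bp (rq (q x)) = bp x by apply: bp_q; rewrite rqP.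
split => //; split.
  move=> c y1 y2; rewrite -(homL hbp); apply: bp_q.
  by rewrite rqP (homL hqh) !rqP.
split.
  move=> y1 y2; rewrite -(homBr hbp); apply: bp_q.
  by rewrite rqP (homBr hqh) !rqP.
move=> b y hy; have [x [px <-]] := hom_par_lift hqh sq hy.
by rewrite bq; apply: (homP hbp).
Qed.

Variable beta : Q -> T.
Hypotheses (hbeta : lsa_hom beta) (hbq : forall x, beta (q x) = bp x).

Definition mu (y : Q) : L := lam (beta y).
Lemma hmu : lsa_hom mu. Proof. exact: hom_comp hbeta hlam. Qed.
Lemma mu_q x : mu (q x) = pi x. Proof. by rewrite /mu hbq bpl. Qed.
Lemma mu_surj : forall l, exists y, mu y = l.
Proof. by move=> l; have [x <-] := hpis l; exists (q x); apply: mu_q. Qed.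

Lemma kerQ y : mu y = 0 -> center y.
Proof.
have [x <-] := sq y; rewrite mu_q => px.
apply: RL => z; have [a <-] := sq z.
rewrite -(homBr hqh); apply/(hq.2.2 _).2.
by apply: span_in; exists a, x.
Qed.

Lemma lift_center t : exists y, center (t - beta y).
Proof.
have [x ex] := hpis (lam t); exists (q x); apply: (klam _).2.
by rewrite (homB hlam) hbq bpl ex subrr.
Qed.


Section KtSec.
Variables (m : nat) (e : 'I_m -> Q) (p : 'I_m -> bool).
Hypotheses (ep : forall j, lsa_par (p j) (e j))
  (espan : forall l : L, exists c : 'I_m -> K, derived (l - \sum_(j < m) c j *: mu (e j)))
  (eind : forall c : 'I_m -> K, derived (\sum_(j < m) c j *: mu (e j)) -> forall j, c j = 0).

Definition Pk (y : Q) : Prop :=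
  exists d (c : 'I_m -> K), derived d /\ y = d + \sum_(j < m) c j *: e j.

Lemma Pk_der d : derived d -> Pk d.
Proof.
move=> hd; exists d, (fun _ => 0); split => //.
by rewrite big1 ?addr0 // => j _; rewrite scale0r.
Qed.
Lemma Pk0 : Pk 0. Proof. exact: Pk_der (span0 _). Qed.
Lemma PkL c x y : Pk x -> Pk y -> Pk (c *: x + y).
Proof.
move=> [d1 [c1 [h1 ->]]] [d2 [c2 [h2 ->]]].
exists (c *: d1 + d2), (fun j => c * c1 j + c2 j); split; first exact: span_lin.
rewrite scalerDr addrACA; congr (_ + _).
by rewrite scaler_sumr -big_split /=; apply: eq_bigr => j _; rewrite scalerDl scalerA.
Qed.
Lemma Pkbr x y : Pk x -> Pk y -> Pk (lsa_bracket x y).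
Proof. by move=> _ _; apply: Pk_der; apply: derived_br. Qed.
Lemma Pkdec x : Pk x -> exists x0 x1,
  Pk x0 /\ Pk x1 /\ lsa_par false x0 /\ lsa_par true x1 /\ x = x0 + x1.
Proof.
move=> [d [c [hd ->]]]; have [d0 [d1 [h0 [h1 [p0 [p1 ->]]]]]] := derived_graded hd.
exists (d0 + \sum_(j < m) (if p j then 0 else c j) *: e j).
exists (d1 + \sum_(j < m) (if p j then c j else 0) *: e j).
split; first by exists d0, (fun j => if p j then 0 else c j).
split; first by exists d1, (fun j => if p j then c j else 0).
split.
  apply: lsa_parD => //; apply: par_sum => j; case E: (p j).
    by rewrite scale0r; apply: lsa_par0.
  by apply: lsa_parZ; have := ep j; rewrite E.
split.
  apply: lsa_parD => //; apply: par_sum => j; case E: (p j).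
    by apply: lsa_parZ; have := ep j; rewrite E.
  by rewrite scale0r; apply: lsa_par0.
rewrite addrACA; congr (_ + _); rewrite -big_split; apply: eq_bigr => j _.
by case: (p j) => /=; rewrite ?scale0r ?add0r ?addr0.
Qed.

Lemma idfL c (a b a' b' : Q) : Pk a -> Pk b -> Pk a' -> Pk b' ->
  a = a' -> b = b' -> c *: a + b = c *: a' + b'.
Proof. by move=> _ _ _ _ -> ->. Qed.
Lemma idfbr (a b a' b' : Q) : Pk a -> Pk b -> Pk a' -> Pk b' ->
  a = a' -> b = b' -> lsa_bracket a b = lsa_bracket a' b'.
Proof. by move=> _ _ _ _ -> ->. Qed.
Lemma idfpar (a0 a1 : Q) : Pk a0 -> Pk a1 -> lsa_par false a0 -> lsa_par true a1 ->
  a0 = a1 -> a0 = 0.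
Proof. by move=> _ _ p0 p1 e01; apply: lsa_direct => //; rewrite e01. Qed.

Definition Kt : lieSuperAlg K :=
  @SQalg K Q Q (fun y : Q => y) Pk Pk0 PkL Pkbr Pkdec idfL idfbr idfpar.

Definition vK (k : Kt) : Q := proj1_sig k.
Definition inK (y : Q) (Hy : Pk y) : Kt := @inSQ K Q Q (fun y : Q => y) Pk y Hy.

Lemma Kex (k : Kt) : exists y (Hy : Pk y), k = inK Hy.
Proof. exact: (@SQ_exists _ _ _ _ _ Pk0 PkL Pkbr Pkdec idfL idfbr idfpar k). Qed.
Lemma Klin c (a b : Q) (Ha : Pk a) (Hb : Pk b) (H : Pk (c *: a + b)) :
  inK H = c *: inK Ha + inK Hb.
Proof. exact: (@SQ_lin _ _ _ _ _ Pk0 PkL Pkbr Pkdec idfL idfbr idfpar). Qed.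
Lemma Kbr (a b : Q) (Ha : Pk a) (Hb : Pk b) (H : Pk (lsa_bracket a b)) :
  inK H = lsa_bracket (inK Ha) (inK Hb).
Proof. exact: (@SQ_br _ _ _ _ _ Pk0 PkL Pkbr Pkdec idfL idfbr idfpar). Qed.
Lemma K0 : (0 : Kt) = inK Pk0.
Proof. exact: (@SQ_0 _ _ _ _ _ Pk0 PkL Pkbr Pkdec idfL idfbr idfpar). Qed.
Lemma vK_inj (k1 k2 : Kt) : vK k1 = vK k2 -> k1 = k2.
Proof. exact: SQ_eq. Qed.
Lemma Kparinv b (k : Kt) : lsa_par b k -> exists y (Hy : Pk y), lsa_par b y /\ k = inK Hy.
Proof. exact: (@SQ_parinv _ _ _ _ _ Pk0 PkL Pkbr Pkdec idfL idfbr idfpar). Qed.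

Lemma hvK : lsa_hom vK.
Proof.
split.
  move=> c k1 k2; have [a [Ha ->]] := Kex k1; have [b [Hb ->]] := Kex k2.
  by rewrite -(Klin Ha Hb (PkL c Ha Hb)).
split.
  move=> k1 k2; have [a [Ha ->]] := Kex k1; have [b [Hb ->]] := Kex k2.
  by rewrite -(Kbr Ha Hb (Pkbr Ha Hb)).
by move=> b k /Kparinv [y [Hy [py ->]]].
Qed.


Definition lamK (k : Kt) : L := mu (vK k).
Lemma hlamK : lsa_hom lamK. Proof. exact: hom_comp hvK hmu. Qed.

Lemma lamK_surj l : exists k, lamK k = l.
Proof.
have [c hc] := espan l.
have [d [hd ed]] := derived_lift hmu mu_surj hc.
have Hy : Pk (d + \sum_(j < m) c j *: e j) by exists d, c.
exists (inK Hy); rewrite /lamK /vK /= (homD hmu) ed (hom_sumZ hmu).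
by rewrite subrK.
Qed.

Lemma derK y : derived y -> forall Hy : Pk y, derived (inK Hy).
Proof.
move=> hy; suff: derived y /\ forall Hy : Pk y, derived (inK Hy) by case.
move: y hy; apply: derived_ind.
- split; first exact: span0.
  move=> H; have -> : inK H = 0 by apply: vK_inj; rewrite K0.
  exact: span0.
- move=> a b; split; first exact: derived_br.
  move=> H.
  have [ka eka] := lamK_surj (mu a); have [kb ekb] := lamK_surj (mu b).
  have za : center (a - vK ka) by apply: kerQ; rewrite (homB hmu) -eka subrr.
  have zb : center (b - vK kb) by apply: kerQ; rewrite (homB hmu) -ekb subrr.
  have -> : inK H = lsa_bracket ka kb.
    by apply: vK_inj; rewrite (homBr hvK); exact: br_center_eq za zb.
  exact: derived_br.
- move=> c x y [dx hx] [dy hy]; split; first exact: span_lin.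
  move=> H; rewrite (Klin (Pk_der dx) (Pk_der dy) H).
  by apply: span_lin; [apply: hx | apply: hy].
Qed.

Lemma lamK_ker k : lamK k = 0 -> derived k /\ center k.
Proof.
have [y [Hy ->]] := Kex k; rewrite /lamK /vK /= => hy.
split; last first.
  move=> k'; have [y' [Hy' ->]] := Kex k'.
  rewrite -(Kbr Hy Hy' (Pkbr Hy Hy')) K0; apply: vK_inj; rewrite /vK /=.
  exact: kerQ hy y'.
have [d [c [hd ey]]] := Hy.
have c0 : forall j, c j = 0.
  apply: eind.
  have -> : \sum_(j < m) c j *: mu (e j) = - mu d.
    by apply/eqP; rewrite -addr_eq0 addrC -(hom_sumZ hmu) -(homD hmu) -ey hy.
  by apply: span_opp; apply: (hom_derived hmu).
apply: derK; rewrite ey big1 ?addr0 // => j _; by rewrite c0 scale0r.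
Qed.

Lemma inCL_lamK : inCL lamK.
Proof. by split; [exact: hlamK | split; [exact: lamK_surj | exact: lamK_ker]]. Qed.

Lemma beta_inj_K y : derived y -> beta y = 0 -> y = 0.
Proof.
have [tau [htau etau]] := hT.2 Kt lamK inCL_lamK.
have [g [hg eg]] := free_lift hF hpi hlamK lamK_surj.
move=> hy hb; have [x [hx ex]] := derived_lift hqh sq hy; subst y.
have a1 := @agree_derived _ _ _ _ (fun a => vK (g a)) q mu (hom_comp hg hvK) hqh hmu
  (fun a => etrans (eg a) (esym (mu_q a))) kerQ x hx.
have a2 := @agree_derived _ _ _ _ g (fun a => tau (bp a)) lamK hg (hom_comp hbp htau) hlamK
  (fun a => etrans (eg a) (esym (etrans (etau _) (bpl a)))) (fun z hz => (lamK_ker hz).2) x hx.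
rewrite hbq in hb.
by rewrite -a1 /= a2 hb (hom0 htau) K0.
Qed.

End KtSec.


Section Fam.
Hypothesis hL : lsa_findim L.

Definition Sfam m := exists (e : 'I_m -> Q) (p : 'I_m -> bool),
  (forall j, lsa_par (p j) (e j)) /\
  (forall l : L, exists c : 'I_m -> K, derived (l - \sum_(j < m) c j *: mu (e j))).

Lemma Sfam_ex : exists m, Sfam m.
Proof.
have [n [v hv]] := hL.
have lift i : exists e0 e1 : Q, lsa_par false e0 /\ lsa_par true e1 /\ v i = mu e0 + mu e1.
  have [x0 [x1 [h0 [h1 ->]]]] := lsa_decomp (v i).
  have [e0 [p0 <-]] := hom_par_lift hmu mu_surj h0.
  have [e1 [p1 <-]] := hom_par_lift hmu mu_surj h1.
  by exists e0, e1.
pose e0 i := proj1_sig (cid (lift i)).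
have h0 i : exists e1, lsa_par false (e0 i) /\ lsa_par true e1 /\ v i = mu (e0 i) + mu e1.
  exact: proj2_sig (cid (lift i)).
pose e1 i := proj1_sig (cid (h0 i)).
have h1 i : lsa_par false (e0 i) /\ lsa_par true (e1 i) /\ v i = mu (e0 i) + mu (e1 i).
  exact: proj2_sig (cid (h0 i)).
pose E (k : 'I_(n + n)) := match split k with inl i => e0 i | inr i => e1 i end.
have E1 i : split (lshift n i) = inl i := unsplitK (inl i).
have E2 i : split (rshift n i) = inr i := unsplitK (inr i).
exists (n + n)%N, E, (fun k => if split k is inr _ then true else false).
split.
  by move=> k; rewrite /E; case: (split k) => i /=; [exact: (h1 i).1 | exact: (h1 i).2.1].
move=> l.
suff [c ->] : exists c : 'I_(n + n) -> K, l = \sum_(k < n + n) c k *: mu (E k).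
  by exists c; rewrite subrr; apply: span0.
move: l (hv l); apply: span_ind.
- by exists (fun _ => 0); rewrite big1 // => k _; rewrite scale0r.
- move=> x [i ->].
  exists (fun k => match split k with inl i' => (i' == i)%:R | inr i' => (i' == i)%:R end).
  rewrite big_split_ord /=.
  under eq_bigr => k _ do rewrite /E E1.
  under [X in _ = _ + X]eq_bigr => k _ do rewrite /E E2.
  by rewrite !delta_sum (h1 i).2.2.
- move=> c x y [cx ->] [cy ->].
  exists (fun k => c * cx k + cy k).
  rewrite scaler_sumr -big_split; apply: eq_bigr => k _.
  by rewrite scalerDl scalerA.
Qed.

Lemma fam_ex : exists m (e : 'I_m -> Q) (p : 'I_m -> bool),
  (forall j, lsa_par (p j) (e j)) /\
  (forall l : L, exists c : 'I_m -> K, derived (l - \sum_(j < m) c j *: mu (e j))) /\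
  (forall c : 'I_m -> K, derived (\sum_(j < m) c j *: mu (e j)) -> forall j, c j = 0).
Proof.
have [m [[e [p [ep es]]] hmin]] := min_ex Sfam_ex.
exists m, e, p; do 2!split => //.
move=> c hc j; apply: contrapT => cj.
revert e p ep es hmin c hc j cj; case: m => [|m'] e p ep es hmin c hc j cj; first by have := ltn_ord j.
have : Sfam m'.
  exists (fun i => e (lift j i)), (fun i => p (lift j i)); split; first by move=> i; apply: ep.
  move=> l; have [c' hc'] := es l.
  pose r := c' j / c j.
  exists (fun i => c' (lift j i) - r * c (lift j i)).
  have -> : \sum_(i < m') (c' (lift j i) - r * c (lift j i)) *: mu (e (lift j i)) =
      \sum_(i < m') c' (lift j i) *: mu (e (lift j i))
      - r *: \sum_(i < m') c (lift j i) *: mu (e (lift j i)).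
    rewrite scaler_sumr -sumrB; apply: eq_bigr => i _.
    by rewrite scalerBl scalerA.
  rewrite (rearr _ (c' j *: mu (e j))).
  have -> : c' j *: mu (e j) + r *: \sum_(i < m') c (lift j i) *: mu (e (lift j i)) =
      r *: \sum_(k < m'.+1) c k *: mu (e k).
    rewrite (bigD1_ord j) //= scalerDr scalerA /r divfK //; exact/eqP.
  have -> : c' j *: mu (e j) + \sum_(i < m') c' (lift j i) *: mu (e (lift j i)) =
      \sum_(k < m'.+1) c' k *: mu (e k).
    by rewrite (bigD1_ord j).
  by apply: span_add => //; apply: span_scale.
by move/hmin; rewrite ltnn.
Qed.

Lemma beta_inj y : derived y -> beta y = 0 -> y = 0.
Proof.
have [m [e [p [ep [es ei]]]]] := fam_ex.
exact: (beta_inj_K ep es ei).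
Qed.


Lemma center_beta y : center (beta y) <-> center y.
Proof.
split.
  move=> h y'; apply: beta_inj; first exact: derived_br.
  by rewrite (homBr hbeta) h.
move=> h t; have [y' zc] := lift_center t.
have z0 : center (beta y - beta y) by rewrite subrr; apply: center0.
by rewrite (br_center_eq z0 zc) -(homBr hbeta) h (hom0 hbeta).
Qed.

Definition qB (y : Q) : PT T := qA (beta y).

Lemma qB_quot : lsa_quotient (@center K Q) qB.
Proof.
split; first exact: hom_comp hbeta (hqA T).
split.
  move=> v; have [t <-] := sqA v; have [y zc] := lift_center t.
  exists y; apply/qA_eq; apply: funext => x.
  by apply/eqP; rewrite -subr_eq0 /ad -brBl -opprB brNl zc oppr0.
by move=> y; rewrite /qB qA_ker center_beta.
Qed.

Definition theta (t : T) : Q :=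
  match pselect (exists y, derived y /\ beta y = t) with
  | left h => proj1_sig (cid h)
  | right _ => 0
  end.

Lemma theta_beta y : derived y -> theta (beta y) = y.
Proof.
move=> hy; rewrite /theta; case: pselect => [h|nh]; last by exfalso; apply: nh; exists y.
have [dy' ey'] := proj2_sig (cid h).
apply/eqP; rewrite -subr_eq0; apply/eqP; apply: beta_inj; first exact: span_sub.
by rewrite (homB hbeta) ey' subrr.
Qed.

Lemma Tder_beta t : derived t -> exists y, derived y /\ beta y = t.
Proof.
move: t; apply: derived_ind.
- by exists 0; split; [apply: span0 | apply: hom0].
- move=> a b; have [ya za] := lift_center a; have [yb zb] := lift_center b.
  exists (lsa_bracket ya yb); split; first exact: derived_br.
  by rewrite (homBr hbeta) (br_center_eq za zb).
- move=> c x y [yx [dx <-]] [yy [dy <-]].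
  by exists (c *: yx + yy); split; [apply: span_lin | apply: homL].
Qed.

Lemma theta_iso : derived_iso theta.
Proof.
split.
  move=> c x y /Tder_beta [yx [dx <-]] /Tder_beta [yy [dy <-]].
  by rewrite -(homL hbeta) !theta_beta //; apply: span_lin.
split.
  move=> x y /Tder_beta [yx [dx <-]] /Tder_beta [yy [dy <-]].
  by rewrite -(homBr hbeta) !theta_beta //; apply: derived_br.
split.
  move=> b x /Tder_beta [y [dy <-]] hb; rewrite theta_beta //.
  have [d0 [d1 [h0 [h1 [p0 [p1 ey]]]]]] := derived_graded dy.
  have e : beta d0 + beta d1 = beta y by rewrite ey (homD hbeta).
  case: b hb => hb.
    have [e0 _] := par_uniq (homP hbeta p0) (homP hbeta p1) (lsa_par0 _ _) hb
       (etrans e (esym (add0r _))).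
    have d0z : d0 = 0 by apply: beta_inj.
    by rewrite ey d0z add0r.
  have [_ e1] := par_uniq (homP hbeta p0) (homP hbeta p1) hb (lsa_par0 _ _)
     (etrans e (esym (addr0 _))).
  have d1z : d1 = 0 by apply: beta_inj.
  by rewrite ey d1z addr0.
split.
  by move=> x /Tder_beta [y [dy <-]]; rewrite theta_beta.
split.
  move=> x y /Tder_beta [yx [dx <-]] /Tder_beta [yy [dy <-]].
  by rewrite !theta_beta // => ->.
move=> y dy; exists (beta y); split; first exact: (hom_derived hbeta).
exact: theta_beta.
Qed.

Lemma iso_main : isoclinic T Q.
Proof.
exists (PT T), (@qA K T), (PT T), qB, (fun v => v), theta.
split; first exact: qA_quot.
split; first exact: qB_quot.
split.
  split; first by split; [|split].
  by exists (fun v => v).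
split; first exact: theta_iso.
move=> a b c d /qA_eq ec /qA_eq ed.
have za : center (a - beta c) by apply: ad_center.
have zb : center (b - beta d) by apply: ad_center.
by rewrite (br_center_eq za zb) -(homBr hbeta) theta_beta //; apply: derived_br.
Qed.

End Fam.

End Main.

End Aux.
Import Aux.

Theorem theorem4p5 (K : fieldType)
  (hK2 : 2%:R != 0 :> K) (hK3 : 3%:R != 0 :> K)
  (L : lieSuperAlg K) (hL : lsa_findim L)
  (X : Type) (deg : X -> bool) (F : lieSuperAlg K) (iota : X -> F)
  (hF : lsa_free deg iota)
  (pi : F -> L) (hpi : lsa_hom pi) (hpis : forall y, exists x, pi x = y)
  (T : lieSuperAlg K) (lam : T -> L) (hT : universal_CL lam)
  (Q : lieSuperAlg K) (q : F -> Q)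
  (hq : lsa_quotient (comm_span (fun _ : F => True) (fun r => pi r = 0)) q) :
  isoclinic T Q.
Proof.
have [bp [hbp bpl]] := free_lift hF hpi (hlam hT) (slam hT).
have [beta [hbeta hbq]] := exists_beta hT hq hbp bpl.
exact: (iso_main hF hpi hpis hT hq hbp bpl hbeta hbq hL).
Qed.
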